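(* Let $G=\bigl((f_j)_{j=1}^n;(\mu^{R})_{\emptyset\ne R\subseteq[n]}\bigr)$ be an $n$-resource selection game. If $f_1,\ldots,f_n$ are continuous, then a strong Nash equilibrium exists in $G$.
   Context: Write $[n]=\{1,\ldots,n\}$ and $\mathbb{R}_{\ge}=[0,\infty)$. An $n$-resource selection game is a pair $G=\bigl((f_j)_{j=1}^n;(\mu^{R})_{\emptyset\ne R\subseteq[n]}\bigr)$ where each $f_j:\mathbb{R}_{\ge}\to\mathbb{R}$ is nondecreasing and $\mu^R\in\mathbb{R}_{\ge}$ for every nonempty $R\subseteq[n]$ (the mass of players of type $R$, who may use only resources in $R$). A consumption profile is a map $s$ assigning to each nonempty $R\subseteq[n]$ a vector $s(R)\in\mathbb{R}_{\ge}^{[n]}$ with $s_j(R)=0$ for $j\notin R$ and $\sum_{j}s_j(R)=\mu^R$. The load of resource $j$ is $\mu^s_j=\sum_{R}s_j(R)$ and its cost is $h^s_j=f_j(\mu^s_j)$. $s$ is a Nash equilibrium if for every nonempty $R$, every $k$ with $s_k(R)>0$ and every $j\in R$, $h^s_k\le h^s_j$. For a Nash equilibrium $s$ and $R$ with $\mu^R>0$, let $h^R=h^s_k$ for any $k$ with $s_k(R)>0$ (well defined). A Nash equilibrium $s$ is a strong Nash equilibrium if there is no consumption profile $s'\ne s$ such that for every nonempty $R$ and every $k$ with $s'_k(R)>s_k(R)$ one has $h^{s'}_k<h^R$. *)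

(* Defs.v *)
From Stdlib Require Import Reals.
From mathcomp Require Import all_boot.
Set Implicit Arguments. Unset Strict Implicit. Unset Printing Implicit Defensive.

Local Open Scope R_scope.

(* Resources are indexed by 'I_n (i.e. 0..n-1 instead of 1..n);
   player types are nonempty subsets R : {set 'I_n}. *)

Definition nondecr_nonneg (f : R -> R) : Prop :=
  forall x y : R, 0 <= x -> x <= y -> f x <= f y.

Definition continuous_nonneg (f : R -> R) : Prop :=
  forall x : R, 0 <= x -> forall eps : R, 0 < eps ->
    exists delta : R, 0 < delta /\
      forall y : R, 0 <= y -> Rabs (y - x) < delta -> Rabs (f y - f x) < eps.

Definition is_game (n : nat) (f : 'I_n -> R -> R) (mu : {set 'I_n} -> R) : Prop :=
  (forall j, nondecr_nonneg (f j)) /\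
  (forall S : {set 'I_n}, S != set0 -> 0 <= mu S).

(* consumption profile: only the values on nonempty S are meaningful *)
Definition is_profile (n : nat) (mu : {set 'I_n} -> R)
    (s : {set 'I_n} -> 'I_n -> R) : Prop :=
  forall S : {set 'I_n}, S != set0 ->
    (forall j, 0 <= s S j) /\
    (forall j, j \notin S -> s S j = 0) /\
    \big[Rplus/0]_(j : 'I_n) s S j = mu S.

Definition load (n : nat) (s : {set 'I_n} -> 'I_n -> R) (j : 'I_n) : R :=
  \big[Rplus/0]_(S : {set 'I_n} | S != set0) s S j.

Definition cost (n : nat) (f : 'I_n -> R -> R) (s : {set 'I_n} -> 'I_n -> R)
    (j : 'I_n) : R := f j (load s j).

Definition is_NE (n : nat) (f : 'I_n -> R -> R) (mu : {set 'I_n} -> R)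
    (s : {set 'I_n} -> 'I_n -> R) : Prop :=
  is_profile mu s /\
  forall S : {set 'I_n}, S != set0 ->
    forall k j : 'I_n, 0 < s S k -> j \in S -> cost f s k <= cost f s j.

(* s' is a profitable coalitional deviation from s: s' differs from s (on some
   nonempty type), and every resource k receiving more mass of type S under s'
   has cost under s' strictly below h^S (the equilibrium cost of type S under s,
   i.e. the cost of some resource used by type S under s). *)
Definition is_SNE (n : nat) (f : 'I_n -> R -> R) (mu : {set 'I_n} -> R)
    (s : {set 'I_n} -> 'I_n -> R) : Prop :=
  is_NE f mu s /\
  ~ exists s' : {set 'I_n} -> 'I_n -> R,
      is_profile mu s' /\
      (exists (S : {set 'I_n}) (j : 'I_n), S != set0 /\ s' S j <> s S j) /\
      forall S : {set 'I_n}, S != set0 -> forall k : 'I_n,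
        s S k < s' S k ->
        exists k' : 'I_n, 0 < s S k' /\ cost f s' k < cost f s k'.

(* Main.v *)
Require Import Defs.
From Stdlib Require Import Reals Lra Psatz.
From Coquelicot Require Coquelicot.
From mathcomp Require Import all_boot all_order all_algebra.
From mathcomp Require Import mathcomp_extra boolp classical_sets functions reals interval_inference topology normedtype derive Rstruct Rstruct_topology.
Import numFieldNormedType.Exports.
Import Order.TTheory GRing.Theory Num.Theory.
Set Implicit Arguments. Unset Strict Implicit.
Local Notation set0 := (@finset.set0 _).

Module Integ.
Import Coquelicot.Coquelicot.
Open Scope R_scope.

Definition Fprim (g : R -> R) (x : R) : R := RInt g 0 x.

Lemma exR (g : R -> R) a b : (forall x, continuity_pt g x) -> ex_RInt g a b.
Proof.
move=> H; apply: ex_RInt_continuous => z _.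
by apply/continuity_pt_filterlim.
Qed.

Lemma Fprim_bounds (g : R -> R) :
  (forall x y, x <= y -> g x <= g y) -> (forall x, continuity_pt g x) ->
  forall a b, a <= b ->
   (b - a) * g a <= Fprim g b - Fprim g a <= (b - a) * g b.
Proof.
move=> Hm Hc a b Hab.
have E : Fprim g b - Fprim g a = RInt g a b.
  rewrite /Fprim -(RInt_Chasles g 0 a b); try exact: exR.
  rewrite /plus /=. ring.
rewrite E.
have C1 : RInt (fun _ => g a) a b = (b - a) * g a.
  by rewrite RInt_const /scal /= /mult.
have C2 : RInt (fun _ => g b) a b = (b - a) * g b.
  by rewrite RInt_const /scal /= /mult.
split.
- rewrite -C1; apply: RInt_le => //; try exact: exR.
  + apply: exR => x; apply: continuity_pt_const => u v //.
  + move=> x [h1 h2]; apply: Hm; lra.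
- rewrite -C2; apply: RInt_le => //; try exact: exR.
  + apply: exR => x; apply: continuity_pt_const => u v //.
  + move=> x [h1 h2]; apply: Hm; lra.
Qed.
End Integ.

Section Std.
Local Open Scope R_scope.
Lemma F_lip (F g : R -> R) :
  (forall x y, x <= y -> g x <= g y) ->
  (forall a b, a <= b -> (b - a) * g a <= F b - F a <= (b - a) * g b) ->
  forall x y, Rabs (y - x) < 1 ->
   Rabs (F y - F x) <= Rabs (y - x) * (Rabs (g (x - 1)) + Rabs (g (x + 1))).
Proof.
move=> Hm Hb x y Hy.
set K := Rabs (g (x - 1)) + Rabs (g (x + 1)).
have a1 := Rle_abs (g (x-1)). have a2 := Rabs_pos (g (x+1)).
have a3 := Rle_abs (- g (x-1)). have a4 := Rle_abs (g (x+1)).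
have a5 := Rabs_pos (g (x-1)).
rewrite Rabs_Ropp in a3.
have Hy2 := Rle_abs (y - x). have Hy3 := Rle_abs (- (y - x)).
rewrite Rabs_Ropp in Hy3.
case: (Rle_lt_dec x y) => Hd.
- have [h1 h2] := Hb x y Hd.
  have g1 : g (x - 1) <= g x by apply: Hm; lra.
  have g2 : g y <= g (x + 1) by apply: Hm; lra.
  have g3 : g x <= g y by apply: Hm; lra.
  rewrite (Rabs_pos_eq (y - x)); last lra.
  apply: Rabs_le; split; rewrite /K; nra.
- have [h1 h2] := Hb y x ltac:(lra).
  have g1 : g (x - 1) <= g y by apply: Hm; lra.
  have g2 : g x <= g (x + 1) by apply: Hm; lra.
  have g3 : g y <= g x by apply: Hm; lra.
  rewrite (Rabs_left (y - x)); last lra.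
  apply: Rabs_le; split; rewrite /K; nra.
Qed.

Lemma F_cont (F g : R -> R) :
  (forall x y, x <= y -> g x <= g y) ->
  (forall a b, a <= b -> (b - a) * g a <= F b - F a <= (b - a) * g b) ->
  forall x, continuity_pt F x.
Proof.
move=> Hm Hb x eps Heps.
set K := Rabs (g (x - 1)) + Rabs (g (x + 1)).
have K0 : 0 <= K by rewrite /K; have := Rabs_pos (g (x-1)); have := Rabs_pos (g (x+1)); lra.
exists (Rmin 1 (eps / (K + 1))); split.
  apply: Rmin_glb_lt; first lra. apply: Rdiv_lt_0_compat; lra.
move=> y [_ Hy]; rewrite /R_dist /= /R_dist in Hy *.
have H1 : Rabs (y - x) < 1 by apply: Rlt_le_trans Hy (Rmin_l _ _).
have H2 : Rabs (y - x) < eps / (K + 1) by apply: Rlt_le_trans Hy (Rmin_r _ _).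
have := @F_lip F g Hm Hb x y H1.
fold K => H3.
have H4 : Rabs (y - x) * (K + 1) < eps.
  have -> : eps = eps / (K + 1) * (K + 1) by field; lra.
  apply: Rmult_lt_compat_r; lra.
have := Rabs_pos (y - x). nra.
Qed.

Lemma g_mono (f : R -> R) :
  (forall x y : R, 0 <= x -> x <= y -> f x <= f y) ->
  forall x y, x <= y -> f (Rmax 0 x) <= f (Rmax 0 y).
Proof.
move=> H x y Hxy; apply: H; first exact: Rmax_l.
apply: Rle_max_compat_l => //.
Qed.

Lemma g_cont (f : R -> R) :
  (forall x : R, 0 <= x -> forall eps : R, 0 < eps ->
    exists delta : R, 0 < delta /\
      forall y : R, 0 <= y -> Rabs (y - x) < delta -> Rabs (f y - f x) < eps) ->
  forall x, continuity_pt (fun t => f (Rmax 0 t)) x.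
Proof.
move=> H x eps Heps.
have [d [d0 Hd]] := H (Rmax 0 x) (Rmax_l _ _) eps Heps.
exists d; split => // y [_ Hy]; rewrite /R_dist /= /R_dist in Hy *.
apply: Hd; first exact: Rmax_l.
eapply Rle_lt_trans; [|exact Hy].
unfold Rmax, Rabs; repeat destruct Rle_dec; repeat destruct Rcase_abs; lra.
Qed.

End Std.

Local Open Scope ring_scope.
Lemma loadE n (s : {set 'I_n} -> 'I_n -> R) j : load s j = \sum_(S : {set 'I_n} | S != set0) s S j.
Proof. by []. Qed.
Lemma profE n (mu : {set 'I_n} -> R) s : is_profile mu s <->
  forall S : {set 'I_n}, S != set0 ->
    (forall j, 0 <= s S j) /\ (forall j, j \notin S -> s S j = 0) /\ \sum_j s S j = mu S.
Proof.
split=> H S HS; have [h1 [h2 h3]] := H S HS; split; try split => //;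
 by move=> j; apply/RleP.
Qed.

Lemma sum_le_eq (I : finType) (a b : I -> R) :
  (forall i, a i <= b i) -> \sum_i a i = \sum_i b i -> forall i, a i = b i.
Proof.
move=> Hle Hs.
have H0 : \sum_i (b i - a i) == 0 by rewrite sumrB Hs subrr.
have Hpos : forall i, true -> 0 <= b i - a i by move=> i _; rewrite subr_ge0.
have H1 := psumr_eq0P Hpos (eqP H0).
move=> i; apply/eqP; rewrite eq_sym -subr_eq0; apply/eqP; exact: H1.
Qed.

Lemma load_ge0 n mu (s : {set 'I_n} -> 'I_n -> R) : is_profile mu s -> forall j, 0 <= load s j.
Proof.
move=> /profE Hp j; rewrite loadE; apply: sumr_ge0 => S HS; by have [h _] := Hp S HS.
Qed.

Lemma sum_load n mu (s : {set 'I_n} -> 'I_n -> R) : is_profile mu s ->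
  \sum_j load s j = \sum_(S : {set 'I_n} | S != set0) mu S.
Proof.
move=> /profE Hp; under eq_bigr do rewrite loadE.
rewrite exchange_big /=; apply: eq_bigr => S HS; by have [_ [_ h]] := Hp S HS.
Qed.

Lemma NE_SNE n f mu (s : {set 'I_n} -> 'I_n -> R) :
  is_game f mu -> is_NE f mu s -> is_SNE f mu s.
Proof.
move=> [Hf Hmu] [Hp Hne]; split; first by split.
move=> [s' [Hp' [[S0 [j0 [HS0 Hne0]]] Hdev]]].
have Hp1 := Hp; have Hp1' := Hp'.
move/profE: Hp1 => Hq; move/profE: Hp1' => Hq'.
have inS : forall S k, S != set0 -> s S k < s' S k -> k \in S.
  move=> S k HS Hlt; apply/negPn/negP => Hk.
  have [_ [h2 _]] := Hq S HS; have [_ [h2' _]] := Hq' S HS.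
  by move: Hlt; rewrite h2 // h2' // ltxx.
have St1 : forall k, load s' k <= load s k.
  move=> k; rewrite leNgt; apply/negP => Hlt.
  case: (boolP [exists S : {set 'I_n}, (S != set0) && (s S k < s' S k)]).
  - move=> /existsP [S /andP [HS Hlt2]].
    have [k' [Hk'pos Hcost]] := Hdev S HS k (RltP Hlt2).
    have Hk := inS S k HS Hlt2.
    have H1 := Hne S HS k' k Hk'pos Hk.
    have H2 : Rle (cost f s k) (cost f s' k).
      apply: Hf; first by apply/RleP; exact: (load_ge0 Hp k).
      by apply/RleP; apply: ltW.
    lra.
  - move=> /negP Hn; move: Hlt; rewrite !loadE => Hlt.
    suff : \sum_(S : {set 'I_n} | S != set0) s' S k <= \sum_(S : {set 'I_n} | S != set0) s S k
      by rewrite leNgt Hlt.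
    apply: ler_sum => S HS; rewrite leNgt; apply/negP => H; apply: Hn.
    by apply/existsP; exists S; rewrite HS H.
have St2 : forall k, load s' k = load s k.
  by apply: sum_le_eq => //; rewrite (sum_load Hp) (sum_load Hp').
have St3 : forall S k, S != set0 -> s' S k <= s S k.
  move=> S k HS; rewrite leNgt; apply/negP => Hlt2.
  have [k' [Hk'pos Hcost]] := Hdev S HS k (RltP Hlt2).
  have Hk := inS S k HS Hlt2.
  have H1 := Hne S HS k' k Hk'pos Hk.
  move: Hcost; rewrite /cost St2 => Hcost.
  rewrite /cost in H1; lra.
apply: Hne0; apply: (sum_le_eq (St3 S0 ^~ HS0)).
by have [_ [_ ->]] := Hq S0 HS0; have [_ [_ ->]] := Hq' S0 HS0.
Qed.

Definition Pot n (F : 'I_n -> R -> R) (s : {set 'I_n} -> 'I_n -> R) :=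
  \sum_j F j (load s j).

Lemma sum_if (n : nat) (j : 'I_n) (x : R) : \sum_(i : 'I_n) (if i == j then x else 0) = x.
Proof. by rewrite (bigD1 j) //= eqxx big1 ?addr0 // => i /negbTE ->. Qed.

Lemma term_le_load n (s : {set 'I_n} -> 'I_n -> R) mu S k :
  is_profile mu s -> S != set0 -> s S k <= load s k.
Proof.
move=> /profE Hp HS; rewrite loadE (bigD1 S) //= lerDl.
apply: sumr_ge0 => S' /andP [H _]; by have [h _] := Hp S' H.
Qed.

Lemma addRE (x y : R) : (x + y)%R = Rplus x y. Proof. by []. Qed.
Lemma oppRE (x : R) : (- x)%R = Ropp x. Proof. by []. Qed.
Lemma mulRE (x y : R) : (x * y)%R = Rmult x y. Proof. by []. Qed.
Lemma zeroRE : (GRing.zero : R) = IZR Z0. Proof. by []. Qed.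
Definition mcE := (addRE, oppRE, mulRE, zeroRE).

Section FO.
Local Open Scope R_scope.

Lemma first_order n (f : 'I_n -> R -> R) mu (F : 'I_n -> R -> R) (s : {set 'I_n} -> 'I_n -> R) :
  is_game f mu -> (forall j, continuous_nonneg (f j)) ->
  (forall j a b, 0 <= a -> a <= b ->
     (b - a) * f j a <= F j b - F j a /\ F j b - F j a <= (b - a) * f j b) ->
  is_profile mu s -> (forall j, s set0 j = 0) ->
  (forall s', is_profile mu s' -> (forall j, s' set0 j = 0) -> Pot F s <= Pot F s') ->
  is_NE f mu s.
Proof.
move=> [Hf Hmu] Hc HF Hp H0 Hmin; split => // S HS k j Hk Hj.
apply: Rnot_lt_le => Hlt.
rewrite /cost in Hlt.
have Hkj : k != j by apply/eqP => E; subst; exact: (Rlt_irrefl _ Hlt).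
have Hp2 := Hp; move/profE: Hp2 => Hq.
have HkS : k \in S.
  apply/negPn/negP => H; have [_ [h _]] := Hq S HS; rewrite h // in Hk; exact: (Rlt_irrefl _ Hk).
set Lk := load s k in Hlt *; set Lj := load s j in Hlt *.
have Lk1 : s S k <= Lk by apply/RleP; exact: term_le_load Hp HS.
have Lj0 : 0 <= Lj by apply/RleP; exact: load_ge0 Hp j.
set e := (f k Lk - f j Lj) / 2.
have e0 : 0 < e by rewrite /e; lra.
have [dk [dk0 Hdk]] := Hc k Lk ltac:(lra) e e0.
have [dj [dj0 Hdj]] := Hc j Lj Lj0 e e0.
set eps := Rmin (s S k) (Rmin (dk/2) (dj/2)).
have eps0 : 0 < eps.
  apply: Rmin_glb_lt => //; apply: Rmin_glb_lt; lra.
have eps1 : eps <= s S k by apply: Rmin_l.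
have eps2 : eps < dk.
  have := Rmin_r (s S k) (Rmin (dk/2) (dj/2)); have := Rmin_l (dk/2) (dj/2); rewrite -/eps; lra.
have eps3 : eps < dj.
  have := Rmin_r (s S k) (Rmin (dk/2) (dj/2)); have := Rmin_r (dk/2) (dj/2); rewrite -/eps; lra.
have A1 : f j (Lj + eps) < f k (Lk - eps).
  have [h1 h2] := Rabs_def2 _ _ (Hdk (Lk - eps) ltac:(lra) ltac:(rewrite Rabs_left; lra)).
  have [h3 h4] := Rabs_def2 _ _ (Hdj (Lj + eps) ltac:(lra) ltac:(rewrite Rabs_pos_eq; lra)).
  rewrite /e in h1 h2 h3 h4; lra.
pose d (i : 'I_n) : R := ((if i == j then eps else 0) - (if i == k then eps else 0))%R.
pose s' := fun S' i => (s S' i + (if S' == S then d i else 0))%R.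
have Hd : \sum_i d i = 0%R by rewrite sumrB !sum_if subrr.
have Hdk' : d k = (- eps)%R by rewrite /d eqxx (negbTE Hkj) sub0r.
have Hdj' : d j = eps by rewrite /d eqxx eq_sym (negbTE Hkj) subr0.
have Hdo : forall i, i != k -> i != j -> d i = 0%R.
  by move=> i /negbTE ik /negbTE ij; rewrite /d ik ij subr0.
have Hp' : is_profile mu s'.
  apply/profE => S' HS'; have [h1 [h2 h3]] := Hq S' HS'.
  rewrite /s'; case: (eqVneq S' S) => [E|NE]; last first.
    split; [|split].
    - by move=> i; rewrite addr0.
    - by move=> i Hi; rewrite addr0 h2.
    - by under eq_bigr do rewrite addr0.
  subst S'; split; [|split].
  - move=> i; case: (eqVneq i k) => [->|ik]; first by rewrite Hdk'; apply/RleP; rewrite !mcE; lra.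
    case: (eqVneq i j) => [->|ij]; first by rewrite Hdj'; apply/RleP; have := h1 j; move/RleP; rewrite !mcE; lra.
    by rewrite Hdo // addr0.
  - move=> i Hi; have ik : i != k by apply: contraNneq Hi => ->.
    have ij : i != j by apply: contraNneq Hi => ->.
    by rewrite Hdo // addr0 h2.
  - by rewrite big_split /= h3 Hd addr0.
have H0' : forall i, s' set0 i = 0.
  move=> i; rewrite /s' H0; have : (set0 == S) = false by apply/negbTE; rewrite eq_sym.
  by move=> ->; rewrite addr0.
have Hload : forall i, load s' i = (load s i + d i)%R.
  move=> i.
  have Hsum : \sum_(S' : {set 'I_n} | S' != set0) (if S' == S then d i else 0%R) = d i.
    rewrite (bigD1 S) //= eqxx big1 ?addr0 //.
    by move=> S' /andP [_ /negbTE ->].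
  by rewrite !loadE /s' big_split /= Hsum.
have E : (Pot F s' - Pot F s = (F k (Lk - eps) - F k Lk) + (F j (Lj + eps) - F j Lj))%R.
  rewrite /Pot -sumrB (bigD1 k) //= (bigD1 j) /=; last by rewrite eq_sym.
  rewrite big1 ?addr0; last first.
    by move=> i /andP [ik ij]; rewrite Hload Hdo // addr0 subrr.
  by rewrite !Hload Hdk' Hdj'.
have B1 := HF k (Lk - eps) Lk ltac:(lra) ltac:(lra).
have B2 := HF j Lj (Lj + eps) Lj0 ltac:(lra).
have M := Hmin s' Hp' H0'.
have A2 : eps * f j (Lj + eps) < eps * f k (Lk - eps) by apply: Rmult_lt_compat_l.
rewrite !mcE -/(Rminus Lk eps) in E.
replace (Lk - (Lk - eps)) with eps in B1 by ring.
replace (Lj + eps - Lj) with eps in B2 by ring.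
lra.
Qed.
End FO.

Section Topo.
Local Open Scope classical_set_scope.
Local Open Scope ring_scope.
Definition Nn n := #|{: {set 'I_n} * 'I_n}|.
Definition prof (K : realType) n (v : 'rV[K]_(Nn n)) (S : {set 'I_n}) (j : 'I_n) : K :=
  v ord0 (enum_rank (S, j)).
Definition vec (K : realType) n (s : {set 'I_n} -> 'I_n -> K) : 'rV[K]_(Nn n) :=
  \row_i s (enum_val i).1 (enum_val i).2.

Lemma prof_vec (K : realType) n (s : {set 'I_n} -> 'I_n -> K) : prof (vec s) = s.
Proof. by apply/funext => S; apply/funext => j; rewrite /prof /vec mxE enum_rankK. Qed.

Definition isprof (K : realType) n (mu : {set 'I_n} -> K) (s : {set 'I_n} -> 'I_n -> K) :=
  forall S : {set 'I_n}, S != set0 ->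
    (forall j, 0 <= s S j) /\ (forall j, j \notin S -> s S j = 0) /\ \sum_j s S j = mu S.

Definition PotK (K : realType) n (F : 'I_n -> K -> K) (s : {set 'I_n} -> 'I_n -> K) :=
  \sum_j F j (\sum_(S : {set 'I_n} | S != set0) s S j).

Lemma closed_forall {T : topologicalType} {I : Type} (P : I -> T -> Prop) :
  (forall i, closed [set x | P i x]) -> closed [set x | forall i, P i x].
Proof.
move=> H.
have -> : [set x | forall i, P i x] = \bigcap_(i in setT) [set x | P i x].
  apply/seteqP; split => x /= Hx i.
    by move=> _; apply: Hx.
  by apply: Hx.
by apply: closed_bigI => i _; exact: H.
Qed.

Lemma closed_imp {T : topologicalType} (b : bool) (P : T -> Prop) :
  closed [set x | P x] -> closed [set x | b -> P x].
Proof.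
case: b => H.
  have -> : [set x | true -> P x] = [set x | P x].
    by apply/seteqP; split => x /= Hx //; apply: Hx.
  exact: H.
have -> : [set x : T | false -> P x] = setT.
  by apply/seteqP; split => x //= _.
exact: closedT.
Qed.

Lemma closed_and {T : topologicalType} (P Q : T -> Prop) :
  closed [set x | P x] -> closed [set x | Q x] -> closed [set x | P x /\ Q x].
Proof. move=> HP HQ; exact: (closedI HP HQ). Qed.

Lemma cont_sum (K : realType) m (I : Type) (r : seq I) (P : pred I) (G : I -> 'rV[K]_m -> K) :
  (forall i, continuous (G i)) -> continuous (fun v => \sum_(i <- r | P i) G i v).
Proof.
move=> HG; elim: r => [|i r IH].
  under [fun v => _]funext do rewrite big_nil. exact: cst_continuous.
under [fun v => _]funext do rewrite big_cons.
case: (P i).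
  by move=> x; have := continuousD (HG i x) (IH x); exact.
exact: IH.
Qed.


Lemma closed_ge0_cont (K : realType) m (G : 'rV[K]_m -> K) :
  continuous G -> closed [set v | 0 <= G v].
Proof. move=> HG; have H := (preimage_closed (D := [set x : K | 0 <= x]) (fun x _ => HG x) (@closed_ge K 0)). exact: H. Qed.

Lemma closed_eq_cont (K : realType) m (G : 'rV[K]_m -> K) c :
  continuous G -> closed [set v | G v = c].
Proof. move=> HG; exact: (preimage_closed (fun x _ => HG x) (@closed_eq K c)). Qed.

Lemma box_compact (K : realType) m (b : 'I_m -> K) :
  compact [set v : 'rV[K]_m | forall i, `[0, b i]%classic (v ord0 i)].
Proof. exact: (@rV_compact _ _ (fun i => `[0, b i]%classic) (fun i => @segment_compact K 0 (b i))). Qed.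


Lemma cont_epsdelta (K : realType) (G : K -> K) :
  (forall x e, 0 < e -> exists2 d, 0 < d & forall y, `|y - x| < d -> `|G y - G x| < e) ->
  continuous G.
Proof.
move=> H x; apply/cvgrPdist_lt => e e0.
have [d d0 Hd] := H x e e0.
exists d => //= y; rewrite /ball /= => Hy.
by rewrite distrC; apply: Hd; rewrite distrC.
Qed.

Lemma exists_min (K : realType) n (mu : {set 'I_n} -> K) (F : 'I_n -> K -> K) :
  (forall S : {set 'I_n}, S != set0 -> 0 <= mu S) ->
  (forall j x e, 0 < e -> exists2 d, 0 < d & forall y, `|y - x| < d -> `|F j y - F j x| < e) ->
  exists s, isprof mu s /\ (forall j, s set0 j = 0) /\
    (forall s', isprof mu s' -> (forall j, s' set0 j = 0) -> PotK F s <= PotK F s').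
Proof.
move=> Hmu HF'.
have HF : forall j, continuous (F j) by move=> j; apply: cont_epsdelta; exact: HF'.
pose D := [set v : 'rV[K]_(Nn n) | (forall S j, 0 <= prof v S j) /\
   (forall S j, (S == set0) || (j \notin S) -> prof v S j = 0) /\
   (forall S, S != set0 -> \sum_j prof v S j = mu S)].
have Hcoord : forall S j, continuous (fun v : 'rV[K]_(Nn n) => prof v S j).
  by move=> S j; exact: coord_continuous.
have cD : closed D.
  apply: closed_and; [apply: closed_forall => S; apply: closed_forall => j | apply: closed_and].
  - exact: (closed_ge0_cont (Hcoord S j)).
  - apply: closed_forall => S; apply: closed_forall => j; apply: closed_imp.
    apply: closed_eq_cont; exact: Hcoord.
  - apply: closed_forall => S; apply: closed_imp.
    have cs : continuous (fun v : 'rV[K]_(Nn n) => \sum_j prof v S j).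
      by apply: cont_sum => j; exact: Hcoord.
    exact: (@closed_eq_cont _ _ (fun v => \sum_j prof v S j) (mu S) cs).
have cB := @box_compact K (Nn n) (fun i => `|mu (enum_val i).1|).
have cD' : compact D.
  apply: (subclosed_compact cD cB) => v [h1 [h2 h3]] i /=.
  have E : v ord0 i = prof v (enum_val i).1 (enum_val i).2.
    by rewrite /prof -surjective_pairing enum_valK.
  rewrite in_itv /= E; apply/andP; split; first exact: h1.
  case: (eqVneq (enum_val i).1 set0) => HS.
    by rewrite h2 ?HS ?eqxx //.
  apply: (le_trans _ (ler_norm _)); rewrite -h3 //.
  rewrite (bigD1 (enum_val i).2) //= lerDl.
  by apply: sumr_ge0 => j _; exact: h1.
pose s0 := fun (S : {set 'I_n}) (j : 'I_n) =>
  if [pick i in S] is Some i then (if j == i then mu S else 0) else 0.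
have Ds0 : D (vec s0).
  rewrite /D /= prof_vec /s0; split; [|split].
  - move=> S j; case: pickP => [i Hi|_] //.
    case: (j == i) => //; apply: Hmu; apply/set0Pn; by exists i.
  - move=> S j; case: pickP => [i Hi|_] // /orP [/eqP HS|Hj].
      by move: Hi; rewrite HS inE.
    by have -> : (j == i) = false by apply: contraNF Hj => /eqP ->.
  - move=> S HS; case: pickP => [i Hi|H0].
      by rewrite (bigD1 i) //= eqxx big1 ?addr0 // => k /negbTE ->.
    by move: HS => /set0Pn [x Hx]; move: (H0 x); rewrite Hx.
have cPhi : continuous (fun v : 'rV[K]_(Nn n) => PotK F (prof v)).
  rewrite /PotK; apply: cont_sum => j x.
  have cL : continuous (fun v : 'rV[K]_(Nn n) => \sum_(S : {set 'I_n} | S != set0) prof v S j).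
    by apply: cont_sum => S; exact: Hcoord.
  exact: (continuous_comp (cL x) (HF j _)).
have [c Dc Hc] := EVT_min_rV (ex_intro _ (vec s0) Ds0) cD' (continuous_subspaceT cPhi).
move: Dc; rewrite inE => -[h1 [h2 h3]].
exists (prof c); split; [|split].
- move=> S HS; split; [exact: h1|split; last exact: h3].
  by move=> j Hj; apply: h2; rewrite Hj orbT.
- by move=> j; apply: h2; rewrite eqxx.
- move=> s' Hq H0'; have := Hc (vec s'); rewrite prof_vec; apply.
  rewrite inE /D /= prof_vec.
  split; [|split].
  + move=> S j; case: (eqVneq S set0) => [->|HS]; first by rewrite H0'.
    by have [h _] := Hq S HS; exact: h.
  + move=> S j /orP [/eqP ->|Hj]; first exact: H0'.
    case: (eqVneq S set0) => [->|HS]; first exact: H0'.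
    by have [_ [h _]] := Hq S HS; exact: h.
  + by move=> S HS; have [_ [_ h]] := Hq S HS.
Qed.

End Topo.

Section Final.
Local Open Scope R_scope.

Lemma Fbounds (f : R -> R) :
  nondecr_nonneg f -> continuous_nonneg f ->
  let F := Integ.Fprim (fun t => f (Rmax 0 t)) in
  (forall a b, 0 <= a -> a <= b ->
     (b - a) * f a <= F b - F a /\ F b - F a <= (b - a) * f b) /\
  (forall x e, 0 < e -> exists d, 0 < d /\ forall y, Rabs (y - x) < d -> Rabs (F y - F x) < e).
Proof.
move=> Hf Hc F.
have Hgm := g_mono Hf. have Hgc := g_cont Hc.
have HB := Integ.Fprim_bounds Hgm Hgc.
split.
  move=> a b Ha Hab; have [h1 h2] := HB a b Hab.
  have ea : Rmax 0 a = a by apply: Rmax_right.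
  have eb : Rmax 0 b = b by apply: Rmax_right; lra.
  rewrite ea eb in h1 h2.
  by split.
move=> x e He.
have Hcp := F_cont Hgm HB x.
have [d [d0 Hd]] := Hcp e He.
exists d; split => // y Hy.
case: (Req_dec y x) => [->|Hyx].
  by rewrite Rminus_diag Rabs_R0.
apply: Hd; split; first by split => //; apply: not_eq_sym.
exact: Hy.
Qed.
End Final.

Theorem mainTheorem1 (n : nat) (f : 'I_n -> R -> R) (mu : {set 'I_n} -> R) :
  is_game f mu ->
  (forall j : 'I_n, continuous_nonneg (f j)) ->
  exists s : {set 'I_n} -> 'I_n -> R, is_SNE f mu s.
Proof.
move=> Hg Hc; have [Hf Hmu] := Hg.
pose F := fun j => Integ.Fprim (fun t => f j (Rmax 0 t)).
have HF : forall j a b, Rle 0 a -> Rle a b ->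
   Rle (Rmult (Rminus b a) (f j a)) (Rminus (F j b) (F j a)) /\
   Rle (Rminus (F j b) (F j a)) (Rmult (Rminus b a) (f j b)).
  by move=> j; have [h _] := Fbounds (Hf j) (Hc j); exact: h.
have He : forall (j : 'I_n) (x e : R), 0 < e ->
    exists2 d, 0 < d & forall y, `|y - x| < d -> `|F j y - F j x| < e.
  move=> j x e /RltP He; have [_ h] := Fbounds (Hf j) (Hc j).
  have [d [/RltP d0 Hd]] := h x e He.
  exists d => // y /RltP Hy; apply/RltP; exact: Hd.
have Hmu' : forall S : {set 'I_n}, S != set0 -> 0 <= mu S.
  by move=> S HS; apply/RleP; exact: Hmu.
have [s [Hs [H0 Hmin]]] := exists_min Hmu' He.
exists s; apply: NE_SNE => //.
apply: (first_order Hg Hc HF) => //.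
- exact/profE.
- move=> s' Hp' H0'; apply/RleP; apply: Hmin => //; exact/profE.
Qed.
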